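(* Let $\mathcal{F}(\mathsf{REG},\mathsf{REG})$ be the class of all languages $L(\Phi)$ generated by F-systems $\Phi=(L_1,L_2)$ in which both the core language $L_1$ and the folding procedure language $L_2$ are regular. Then $\mathcal{F}(\mathsf{REG},\mathsf{REG})\neq\mathsf{LIN}$; specifically, the linear language $L$ over $\{a,b,c,d,e,f,\#\}$ generated by the grammar $S\to S_1\mid S_2$, $S_1\to aS_1bc\mid a\#bc$, $S_2\to deS_2f\mid de\#f$ (that is, $L=\{a^n\#(bc)^n\mid n\ge1\}\cup\{(de)^n\#f^n\mid n\ge1\}$) is not in $\mathcal{F}(\mathsf{REG},\mathsf{REG})$.
   Context: Let $\Sigma$ be a finite alphabet and $\Gamma=\{\mathtt{u},\mathtt{d}\}$. Define $f:\Sigma^*\times\Sigma\times\Gamma\to\Sigma^*$ by $f(x,a,\mathtt{u})=ax$ and $f(x,a,\mathtt{d})=xa$. The folding function $h:\Sigma^*\times\Gamma^*\to\Sigma^*$ is the partial function with $h(\varepsilon,\varepsilon)=\varepsilon$; if $|w|=|v|>0$ with $w=w'a$ ($a\in\Sigma$) and $v=v'b$ ($b\in\Gamma$), then $h(w,v)=f(h(w',v'),a,b)$; and $h(w,v)$ is undefined if $|w|\neq|v|$. An F-system is a pair $\Phi=(L_1,L_2)$ with $L_1\subseteq\Sigma^*$ and $L_2\subseteq\Gamma^*$; its language is $L(\Phi)=\{h(w,v)\mid w\in L_1, v\in L_2, |w|=|v|\}$. A linear grammar is a context-free grammar all of whose rules have the form $A\to uBv$ or $A\to u$ with $u,v$ terminal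 words and $A,B$ nonterminals; $\mathsf{LIN}$ is the class of languages generated by linear grammars, and $\mathsf{REG}$ the class of regular languages. *)

(* Defs.v *)
From Stdlib Require List.
From mathcomp Require Import all_boot.
Set Implicit Arguments.
Unset Strict Implicit.
Unset Printing Implicit Defensive.

Definition language (Sigma : Type) := seq Sigma -> Prop.

Definition dfa_accepts (Sigma : Type) (Q : finType) (q0 : Q) (delta : Q -> Sigma -> Q)
  (fin : Q -> bool) (w : seq Sigma) : bool :=
  fin (foldl delta q0 w).

Definition is_regular (Sigma : Type) (L : language Sigma) : Prop :=
  exists (Q : finType) (q0 : Q) (delta : Q -> Sigma -> Q) (fin : Q -> bool),
    forall w, L w <-> dfa_accepts q0 delta fin w.

(* A rule A -> u B v  is  (A, inl (u, B, v)); a rule A -> u is (A, inr u). *)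
Record linear_grammar (Sigma : Type) := LinGrammar {
  lg_nonterm : Type;
  lg_start : lg_nonterm;
  lg_rules : seq (lg_nonterm * ((seq Sigma * lg_nonterm * seq Sigma) + seq Sigma))
}.

Inductive derives (Sigma : Type) (G : linear_grammar Sigma) :
    lg_nonterm G -> seq Sigma -> Prop :=
  | derives_term : forall A u,
      List.In (A, inr u) (lg_rules G) -> derives (G:=G) A u
  | derives_lin : forall A u B v w,
      List.In (A, inl (u, B, v)) (lg_rules G) -> derives (G:=G) B w ->
      derives (G:=G) A (u ++ w ++ v).

Definition grammar_language (Sigma : Type) (G : linear_grammar Sigma) : language Sigma :=
  fun w => derives (G:=G) (lg_start G) w.

Definition is_LIN (Sigma : Type) (L : language Sigma) : Prop :=
  exists G : linear_grammar Sigma, forall w, L w <-> grammar_language G w.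

Inductive updown := up | down.

Definition ffold (Sigma : Type) (x : seq Sigma) (a : Sigma) (b : updown) : seq Sigma :=
  match b with up => a :: x | down => rcons x a end.

(* The folding function h on words of equal length:
   h(eps,eps) = eps, h(w'a, v'b) = f(h(w',v'), a, b).  (Undefined otherwise.) *)
Fixpoint hfold_rev (Sigma : Type) (w : seq Sigma) (v : seq updown) : option (seq Sigma) :=
  (* w, v given reversed: last letters first *)
  match w, v with
  | [::], [::] => Some [::]
  | a :: w', b :: v' =>
      match hfold_rev w' v' with Some x => Some (ffold x a b) | None => None end
  | _, _ => None
  end.

Definition hfold (Sigma : Type) (w : seq Sigma) (v : seq updown) : option (seq Sigma) :=
  hfold_rev (rev w) (rev v).

Definition F_language (Sigma : Type) (L1 : language Sigma) (L2 : language updown)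
  : language Sigma :=
  fun x => exists w v, L1 w /\ L2 v /\ size w = size v /\ hfold w v = Some x.

Definition in_F_REG_REG (Sigma : Type) (L : language Sigma) : Prop :=
  exists (L1 : language Sigma) (L2 : language updown),
    is_regular L1 /\ is_regular L2 /\ forall x, L x <-> F_language L1 L2 x.

Inductive sym := sa | sb | sc | sd | se | sf | shash.

Definition L_ex : language sym :=
  fun x => exists n, 1 <= n /\
    (x = nseq n sa ++ shash :: flatten (nseq n [:: sb; sc])
     \/ x = flatten (nseq n [:: sd; se]) ++ shash :: nseq n sf).

Inductive NT := NS | NS1 | NS2.
Definition G_ex : linear_grammar sym :=
  @LinGrammar sym NT NS
    [:: (NS, inl ([::], NS1, [::]));
        (NS, inl ([::], NS2, [::]));
        (NS1, inl ([:: sa], NS1, [:: sb; sc]));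
        (NS1, inr [:: sa; shash; sb; sc]);
        (NS2, inl ([:: sd; se], NS2, [:: sf]));
        (NS2, inr [:: sd; se; shash; sf])].

(* Main.v *)
Require Import Defs.
From mathcomp Require Import all_boot zify.
Set Implicit Arguments.
Unset Strict Implicit.
Unset Printing Implicit Defensive.

Definition sym_eqb (x y : sym) : bool :=
  match x, y with
  | sa, sa | sb, sb | sc, sc | sd, sd | se, se | sf, sf | shash, shash => true
  | _, _ => false end.
Definition cnt (x : sym) (s : seq sym) := count (fun y => sym_eqb y x) s.

Lemma size_sum s : size s = cnt sa s + cnt sb s + cnt sc s + cnt sd s + cnt se s + cnt sf s + cnt shash s.
Proof. rewrite /cnt; elim: s => [|y s IH] //=; case: y => /=; lia. Qed.

Definition isup (b : updown) := match b with up => true | down => false end.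
Definition isdn (b : updown) := ~~ isup b.
Definition UU (w : seq sym) v := mask (map isup v) w.
Definition DD (w : seq sym) v := mask (map isdn v) w.
Definition hh (w : seq sym) (v : seq updown) := rev (UU w v) ++ DD w v.

Lemma hfold_rev_eq w v : size w = size v -> hfold_rev w v = Some (hh (rev w) (rev v)).
Proof.
elim: w v => [|a w IH] [|b v] //= [] Hs; rewrite (IH _ Hs).
rewrite /hh /UU /DD !rev_cons -!cats1 !map_cat !mask_cat ?size_map ?size_rev ?Hs //.
case: b => /=; rewrite ?cats0 ?rev_cat //= ?rcons_cat ?cats1 //.
Qed.

Lemma hfold_eq w v : size w = size v -> hfold w v = Some (hh w v).
Proof. by move=> H; rewrite /hfold hfold_rev_eq ?revK // !size_rev. Qed.

Lemma count_UD (p : pred sym) w v : size w = size v ->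
  count p (UU w v) + count p (DD w v) = count p w.
Proof.
rewrite /UU /DD; elim: w v => [|a w IH] [|b v] //= [] /IH.
case: b => /=; lia.
Qed.

Lemma count_hh p w v : size w = size v -> count p (hh w v) = count p w.
Proof. by move=> H; rewrite /hh count_cat count_rev count_UD. Qed.

Lemma size_hh w v : size w = size v -> size (hh w v) = size w.
Proof. by move=> H; rewrite -!(count_predT) count_hh. Qed.

Definition rep4 (T : Type) (x : seq T) := x ++ x ++ x ++ x.

Lemma hh_split a0 a1 a2 b0 b1 b2 :
  size a0 = size b0 -> size a1 = size b1 -> size a2 = size b2 ->
  hh (a0 ++ a1 ++ a2) (b0 ++ b1 ++ b2) =
   rev (UU a2 b2) ++ rev (UU a1 b1) ++ (rev (UU a0 b0) ++ DD a0 b0) ++ DD a1 b1 ++ DD a2 b2 /\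
  hh (a0 ++ rep4 a1 ++ a2) (b0 ++ rep4 b1 ++ b2) =
   rev (UU a2 b2) ++ rep4 (rev (UU a1 b1)) ++ (rev (UU a0 b0) ++ DD a0 b0) ++ rep4 (DD a1 b1) ++ DD a2 b2.
Proof.
move=> H0 H1 H2; rewrite /hh /UU /DD /rep4 !map_cat !mask_cat ?size_map ?size_cat ?H0 ?H1 ?H2 //.
by rewrite !rev_cat -!catA; split.
all: by rewrite !size_map.
Qed.

Definition fam1 n := nseq n sa ++ shash :: flatten (nseq n [:: sb; sc]).
Definition fam2 n := flatten (nseq n [:: sd; se]) ++ shash :: nseq n sf.

Lemma cnt_flat x n l : cnt x (flatten (nseq n l)) = n * cnt x l.
Proof. elim: n => [|n IH] //=; move: IH; rewrite /cnt count_cat; lia. Qed.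
Lemma size_flat (T : Type) n (l : seq T) : size (flatten (nseq n l)) = n * size l.
Proof. elim: n => [|n IH] //=; rewrite size_cat IH; lia. Qed.
Lemma cnt_nseq x n y : cnt x (nseq n y) = n * sym_eqb y x.
Proof. by rewrite /cnt count_nseq mulnC. Qed.

Lemma nth_all_gen (T : Type) (P : T -> bool) (s : seq T) x0 k :
  all P s -> P x0 -> P (nth x0 s k).
Proof. elim: s k => [|y s IH] [|k] //= /andP [] //. move=> _ H1 H2. exact: IH. Qed.

Lemma nth_flat_nseq (P : sym -> bool) (l : seq sym) n k :
  all P l -> P shash -> P (nth shash (flatten (nseq n l)) k).
Proof.
move=> Hl Hh; elim: n k => [|n IH] k /=; first by rewrite nth_nil.
rewrite nth_cat; case: ifP => _; [exact: nth_all_gen | exact: IH].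
Qed.

Lemma count_nth_const (p : pred sym) c M :
  (forall i, i < size M -> p (nth shash M i) = c) -> count p M = if c then size M else 0.
Proof.
elim: M => [|y M IH] H /=; first by case: c H.
have H0 := H 0 erefl. have H1 : forall i, i < size M -> p (nth shash M i) = c.
  by move=> i Hi; exact: (H i.+1).
rewrite /= in H0; rewrite H0 (IH H1); case: c H0 H H1 IH => _ _ _ _ /=; lia.
Qed.

Lemma cnt0_nth x M i : cnt x M = 0 -> i < size M -> sym_eqb (nth shash M i) x = false.
Proof.
rewrite /cnt; elim: M i => [|y M IH] [|i] //=; case: (sym_eqb y x) => //= H Hi; exact: IH.
Qed.

Lemma nth_mid (T : Type) x0 (L M R : seq T) i : i < size M -> nth x0 (L ++ M ++ R) (size L + i) = nth x0 M i.
Proof. by move=> Hi; rewrite nth_cat ltnNge leq_addr /= addKn nth_cat Hi. Qed.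

Lemma region (s L M R : seq sym) (p : sym -> bool) (b : bool) (n0 : nat) :
  s = L ++ M ++ R -> cnt shash M = 0 ->
  (forall k, k < n0 -> p (nth shash s k) = b) ->
  nth shash s n0 = shash ->
  (forall k, n0 < k -> k < size s -> p (nth shash s k) = ~~ b) ->
  (size L + size M <= n0 /\ count p M = (if b then size M else 0)) \/
  (n0 < size L /\ count p M = (if b then 0 else size M)).
Proof.
move=> Hs Hh H1 H2 H3.
case: (leqP (size L + size M) n0) => Hc.
  left; split => //; apply: count_nth_const => i Hi.
  rewrite -(nth_mid shash L R Hi) -Hs; apply: H1; lia.
case: (ltnP n0 (size L)) => Hd.
  right; split => //.
  have -> : (if b then 0 else size M) = if ~~ b then size M else 0 by clear H1 H3; case: b.
  apply: count_nth_const => i Hi.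
  rewrite -(nth_mid shash L R Hi) -Hs; apply: H3; first lia.
  rewrite Hs !size_cat; lia.
exfalso.
have Hi : n0 - size L < size M by lia.
have := cnt0_nth Hh Hi; rewrite -(nth_mid shash L R Hi) -Hs.
have -> : size L + (n0 - size L) = n0 by lia.
by rewrite H2.
Qed.

Lemma cnt_fam1 x n : cnt x (fam1 n) = n * sym_eqb sa x + sym_eqb shash x + n * (sym_eqb sb x + sym_eqb sc x).
Proof.
have H1 := cnt_flat x n [:: sb; sc]; have H2 := cnt_nseq x n sa.
move: H1 H2; rewrite /fam1 /cnt count_cat /=; case: x => /=; lia.
Qed.

Lemma cnt_fam2 x n : cnt x (fam2 n) = n * (sym_eqb sd x + sym_eqb se x) + sym_eqb shash x + n * sym_eqb sf x.
Proof.
have H1 := cnt_flat x n [:: sd; se]; have H2 := cnt_nseq x n sf.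
move: H1 H2; rewrite /fam2 /cnt count_cat /=; case: x => /=; lia.
Qed.

Lemma cnt_pump x A B C D E :
  cnt x (A ++ rep4 B ++ C ++ rep4 D ++ E) = cnt x (A ++ B ++ C ++ D ++ E) + 3 * (cnt x B + cnt x D).
Proof. rewrite /cnt /rep4 !count_cat; lia. Qed.

Lemma size_fam1 n : size (fam1 n) = 3 * n + 1.
Proof. rewrite /fam1 size_cat /= size_nseq size_flat /=; lia. Qed.
Lemma size_fam2 n : size (fam2 n) = 3 * n + 1.
Proof. rewrite /fam2 size_cat /= size_nseq size_flat /=; lia. Qed.

Lemma nth1_lt n k : k < n -> sym_eqb (nth shash (fam1 n) k) sa = true.
Proof. by move=> H; rewrite /fam1 nth_cat size_nseq H nth_nseq H. Qed.
Lemma nth1_eq n : nth shash (fam1 n) n = shash.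
Proof. by rewrite /fam1 nth_cat size_nseq ltnn subnn. Qed.
Lemma nth1_gt n k : n < k -> sym_eqb (nth shash (fam1 n) k) sa = ~~ true.
Proof.
move=> H; rewrite /fam1 nth_cat size_nseq ltnNge (ltnW H) /=.
have -> : k - n = (k - n.+1).+1 by lia.
rewrite /=. apply/negbTE. by apply: (@nth_flat_nseq (fun y => ~~ sym_eqb y sa)).
Qed.

Lemma nth2_lt n k : k < 2 * n -> sym_eqb (nth shash (fam2 n) k) sf = false.
Proof.
move=> H; rewrite /fam2 nth_cat size_flat /= muln2 -mul2n H. apply/negbTE.
by apply: (@nth_flat_nseq (fun y => ~~ sym_eqb y sf)).
Qed.
Lemma nth2_eq n : nth shash (fam2 n) (2 * n) = shash.
Proof. by rewrite /fam2 nth_cat size_flat /= muln2 -mul2n ltnn subnn. Qed.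
Lemma nth2_gt n k : 2 * n < k -> k < size (fam2 n) -> sym_eqb (nth shash (fam2 n) k) sf = ~~ false.
Proof.
move=> H Hs; rewrite size_fam2 in Hs.
rewrite /fam2 nth_cat size_flat /= muln2 -mul2n ltnNge (ltnW H) /=.
have -> : k - 2 * n = (k - (2 * n).+1).+1 by lia.
by rewrite /= nth_nseq; case: ifP => //; lia.
Qed.

Lemma fam1_lemma n A B C D E : 1 <= n -> A ++ B ++ C ++ D ++ E = fam1 n ->
  L_ex (A ++ rep4 B ++ C ++ rep4 D ++ E) -> size D = 2 * size B.
Proof.
move=> Hn Hs [n' [Hn' HP]].
have Hc : forall x, cnt x (A ++ rep4 B ++ C ++ rep4 D ++ E) = cnt x (fam1 n) + 3 * (cnt x B + cnt x D).
  by move=> x; rewrite cnt_pump Hs.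
have Ha := Hc sa; have Hb := Hc sb; have Hcc := Hc sc; have Hd := Hc sd; have He := Hc se;
have Hf := Hc sf; have Hh := Hc shash.
rewrite !cnt_fam1 /= in Ha Hb Hcc Hd He Hf Hh.
have [HP1|HP2] : (A ++ rep4 B ++ C ++ rep4 D ++ E) = fam1 n' \/ (A ++ rep4 B ++ C ++ rep4 D ++ E) = fam2 n' by [].
2: { rewrite HP2 cnt_fam2 /= in Ha; lia. }
rewrite HP1 !cnt_fam1 /= in Ha Hb Hcc Hd He Hf Hh.
have HhB : cnt shash B = 0 by lia.
have HhD : cnt shash D = 0 by lia.
have RB := @region (fam1 n) A B (C ++ D ++ E) (fun y => sym_eqb y sa) true n (esym Hs) HhB
  (@nth1_lt n) (nth1_eq n) (fun k H _ => nth1_gt H).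
have RD := @region (fam1 n) (A ++ B ++ C) D E (fun y => sym_eqb y sa) true n
  (ltac:(by rewrite -Hs -!catA)) HhD (@nth1_lt n) (nth1_eq n) (fun k H _ => nth1_gt H).
rewrite -/(cnt sa B) -/(cnt sa D) !size_cat in RB RD.
have SB := size_sum B; have SD := size_sum D.
lia.
Qed.

Lemma fam2_lemma n A B C D E : 1 <= n -> A ++ B ++ C ++ D ++ E = fam2 n ->
  L_ex (A ++ rep4 B ++ C ++ rep4 D ++ E) -> size B = 2 * size D.
Proof.
move=> Hn Hs [n' [Hn' HP]].
have Hc : forall x, cnt x (A ++ rep4 B ++ C ++ rep4 D ++ E) = cnt x (fam2 n) + 3 * (cnt x B + cnt x D).
  by move=> x; rewrite cnt_pump Hs.
have Ha := Hc sa; have Hb := Hc sb; have Hcc := Hc sc; have Hd := Hc sd; have He := Hc se;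
have Hf := Hc sf; have Hh := Hc shash.
rewrite !cnt_fam2 /= in Ha Hb Hcc Hd He Hf Hh.
have [HP1|HP2] : (A ++ rep4 B ++ C ++ rep4 D ++ E) = fam1 n' \/ (A ++ rep4 B ++ C ++ rep4 D ++ E) = fam2 n' by [].
  rewrite HP1 cnt_fam1 /= in Hd; lia.
rewrite HP2 !cnt_fam2 /= in Ha Hb Hcc Hd He Hf Hh.
have HhB : cnt shash B = 0 by lia.
have HhD : cnt shash D = 0 by lia.
have RB := @region (fam2 n) A B (C ++ D ++ E) (fun y => sym_eqb y sf) false (2 * n) (esym Hs) HhB
  (@nth2_lt n) (nth2_eq n) (@nth2_gt n).
have RD := @region (fam2 n) (A ++ B ++ C) D E (fun y => sym_eqb y sf) false (2 * n)
  (ltac:(by rewrite -Hs -!catA)) HhD (@nth2_lt n) (nth2_eq n) (@nth2_gt n).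
rewrite -/(cnt sf B) -/(cnt sf D) !size_cat in RB RD.
have SB := size_sum B; have SD := size_sum D.
lia.
Qed.

Definition pump (T : Type) (s : seq T) i j := take i s ++ rep4 (drop i (take j s)) ++ drop j s.

Lemma split3 (T : Type) (s : seq T) i j : i <= j -> s = take i s ++ drop i (take j s) ++ drop j s.
Proof. by move=> H; rewrite catA -{1}(take_takel s H) !cat_take_drop. Qed.

Lemma size_pump (T1 T2 : Type) (s : seq T1) (t : seq T2) i j : size s = size t ->
  size (pump s i j) = size (pump t i j).
Proof. by move=> H; rewrite /pump /rep4 !size_cat !size_drop !size_take H. Qed.

Lemma pump_fold (Q T : Type) (d : Q -> T -> Q) q (w : seq T) i j :
  foldl d q (take i w) = foldl d q (take j w) -> i <= j ->
  foldl d q (pump w i j) = foldl d q w.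
Proof.
move=> E Hij.
have Hseg : foldl d (foldl d q (take i w)) (drop i (take j w)) = foldl d q (take i w).
  by rewrite -foldl_cat -{1}(take_takel w Hij) cat_take_drop E.
by rewrite {2}(split3 w Hij) /pump /rep4 !foldl_cat !Hseg.
Qed.

Lemma pump_decomp w v i j : size w = size v -> i <= j -> j <= size w -> exists A B C D E,
  hh w v = A ++ B ++ C ++ D ++ E /\
  hh (pump w i j) (pump v i j) = A ++ rep4 B ++ C ++ rep4 D ++ E /\
  size B + size D = j - i /\ size B = count isup (drop i (take j v)).
Proof.
move=> H Hij Hj.
have S0 : size (take i w) = size (take i v) by rewrite !size_take H.
have S1 : size (drop i (take j w)) = size (drop i (take j v)) by rewrite !size_drop !size_take H.
have S2 : size (drop j w) = size (drop j v) by rewrite !size_drop H.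
have [E1 E2] := hh_split S0 S1 S2.
exists (rev (UU (drop j w) (drop j v))), (rev (UU (drop i (take j w)) (drop i (take j v)))),
  (rev (UU (take i w) (take i v)) ++ DD (take i w) (take i v)),
  (DD (drop i (take j w)) (drop i (take j v))), (DD (drop j w) (drop j v)).
split; first by rewrite {1}(split3 w Hij) {1}(split3 v Hij) E1.
split; first by rewrite /pump E2.
have Sseg : size (drop i (take j w)) = j - i by rewrite size_drop size_take; case: ifP; lia.
have SU : size (rev (UU (drop i (take j w)) (drop i (take j v)))) = count isup (drop i (take j v)).
  by rewrite size_rev /UU size_mask ?size_map // count_map.
split => //.
rewrite -Sseg -(count_predT (drop i (take j w))) -(count_UD predT S1) !count_predT SU /UU.
by rewrite size_mask ?size_map // count_map.
Qed.

Lemma flat_S (T : Type) n (l : seq T) : flatten (nseq n.+1 l) = flatten (nseq n l) ++ l.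
Proof. elim: n => [|n IH] /=; first by rewrite cats0. by rewrite -catA -IH. Qed.
Lemma nseq_S (T : Type) n (x : T) : nseq n.+1 x = nseq n x ++ [:: x].
Proof. elim: n => [|n IH] //. transitivity (x :: nseq n.+1 x) => //. by rewrite {1}IH. Qed.

Lemma fam1_S n : fam1 n.+1 = [:: sa] ++ fam1 n ++ [:: sb; sc].
Proof. by rewrite /fam1 flat_S /= -catA. Qed.
Lemma fam2_S n : fam2 n.+1 = [:: sd; se] ++ fam2 n ++ [:: sf].
Proof. by rewrite /fam2 (nseq_S n sf) /= -!catA. Qed.

Lemma derives_sound A w : derives (G:=G_ex) A w ->
  (A = NS -> L_ex w) /\ (A = NS1 -> exists n, 1 <= n /\ w = fam1 n) /\
  (A = NS2 -> exists n, 1 <= n /\ w = fam2 n).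
Proof.
elim => {A w}.
- move=> A u Hin; simpl in Hin.
  repeat (destruct Hin as [Hin|Hin]; [inversion Hin; subst|]); try done.
  + split; [by []|split; [move=> _; by exists 1|by []]].
  + split; [by []|split; [by []|move=> _; by exists 1]].
- move=> A u B v w Hin _ [IH0 [IH1 IH2]]; simpl in Hin.
  repeat (destruct Hin as [Hin|Hin]; [inversion Hin; subst|]); try done.
  + split; [move=> _|by []].
    have [n [Hn ->]] := IH1 erefl. exists n; split => //; left; by rewrite /= cats0.
  + split; [move=> _|by []].
    have [n [Hn ->]] := IH2 erefl. exists n; split => //; right; by rewrite /= cats0.
  + split; [by []|split; [move=> _|by []]].
    have [n [Hn ->]] := IH1 erefl. exists n.+1; split => //; by rewrite fam1_S.
  + split; [by []|split; [by []|move=> _]].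
    have [n [Hn ->]] := IH2 erefl. exists n.+1; split => //; by rewrite fam2_S.
Qed.

Lemma der_fam1 n : derives (G:=G_ex) NS1 (fam1 n.+1).
Proof.
elim: n => [|n IH].
  by apply: derives_term; rewrite /=; tauto.
rewrite fam1_S; apply: (@derives_lin sym G_ex NS1 [:: sa] NS1 [:: sb; sc]) => //=; tauto.
Qed.
Lemma der_fam2 n : derives (G:=G_ex) NS2 (fam2 n.+1).
Proof.
elim: n => [|n IH].
  by apply: derives_term; rewrite /=; tauto.
rewrite fam2_S; apply: (@derives_lin sym G_ex NS2 [:: sd; se] NS2 [:: sf]) => //=; tauto.
Qed.

Lemma grammar_ok x : grammar_language G_ex x <-> L_ex x.
Proof.
split; first by move/derives_sound => [H _]; exact: H.
move=> [n [Hn [->|->]]]; case: n Hn => // n _.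
- have D := @derives_lin sym G_ex NS [::] NS1 [::] (fam1 n.+1) ltac:(rewrite /=; tauto) (der_fam1 n).
  by rewrite cats0 /= in D.
- have D := @derives_lin sym G_ex NS [::] NS2 [::] (fam2 n.+1) ltac:(rewrite /=; tauto) (der_fam2 n).
  by rewrite cats0 /= in D.
Qed.

Lemma not_F : ~ in_F_REG_REG L_ex.
Proof.
move=> [L1 [L2 [[Q1 [q1 [d1 [f1 HL1]]]] [[Q2 [q2 [d2 [f2 HL2]]]] H]]]].
pose n := (#|Q1| * #|Q1| * #|Q2|).+1.
have Hn : 1 <= n by [].
have [w1 [v1 [Lw1 [Lv1 [Sz1 Hh1]]]]] : F_language L1 L2 (fam1 n).
  by apply/H; exists n; split => //; left.
have [w2 [v2 [Lw2 [Lv2 [Sz2 Hh2]]]]] : F_language L1 L2 (fam2 n).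
  by apply/H; exists n; split => //; right.
rewrite hfold_eq // in Hh1; rewrite hfold_eq // in Hh2.
case: Hh1 => Hh1; case: Hh2 => Hh2.
have Sw1 : size w1 = 3 * n + 1 by rewrite -(size_hh Sz1) Hh1 size_fam1.
have Sw2 : size w2 = 3 * n + 1 by rewrite -(size_hh Sz2) Hh2 size_fam2.
have Sz12 : size w2 = size v1 by lia.
have Ly2 : L_ex (hh w2 v1).
  by apply/H; exists w2, v1; rewrite hfold_eq.
have ca : cnt sa (hh w2 v1) = 0.
  rewrite /cnt count_hh // -(count_hh _ Sz2) Hh2.
  have := cnt_fam2 sa n; rewrite /cnt /=; lia.
have [n2 [Hn2 Hy2]] : exists n2, 1 <= n2 /\ hh w2 v1 = fam2 n2.
  case: Ly2 => n2 [Hn2 [E|E]]; last by exists n2.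
  by move: ca; rewrite E cnt_fam1 /=; lia.
pose m := size v1.
pose F := fun i : 'I_m.+1 => (foldl d1 q1 (take i w1), foldl d1 q1 (take i w2), foldl d2 q2 (take i v1)).
have : ~~ injectiveb F.
  apply/negP => /injectiveP inj; have := leq_card _ inj.
  rewrite card_ord !card_prod /m -Sz1 Sw1 /n; lia.
case/injectivePn => i [j] Hij EF.
have [i' [j' [Hlt [Hj [E1 [E2 E3]]]]]] : exists i' j' : nat, i' < j' /\ j' <= m /\
   foldl d1 q1 (take i' w1) = foldl d1 q1 (take j' w1) /\
   foldl d1 q1 (take i' w2) = foldl d1 q1 (take j' w2) /\
   foldl d2 q2 (take i' v1) = foldl d2 q2 (take j' v1).
  case: EF => e1 e2 e3.
  case: (ltngtP i j) => c.
  - exists i, j; split => //; split; [by have := ltn_ord j | by []].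
  - exists j, i; split => //; split; [by have := ltn_ord i | by []].
  - by move: Hij; rewrite -val_eqE /= c eqxx.
have Hle := ltnW Hlt.
have Lw1' : L1 (pump w1 i' j') by apply/HL1; rewrite /dfa_accepts pump_fold //; apply/HL1.
have Lw2' : L1 (pump w2 i' j') by apply/HL1; rewrite /dfa_accepts pump_fold //; apply/HL1.
have Lv1' : L2 (pump v1 i' j') by apply/HL2; rewrite /dfa_accepts pump_fold //; apply/HL2.
have [A [B [C [D [E [D1 [P1 [S1 U1]]]]]]]] := pump_decomp Sz1 Hle (ltac:(rewrite Sz1; exact Hj)).
have [A' [B' [C' [D' [E' [D2 [P2 [S2 U2]]]]]]]] := pump_decomp Sz12 Hle (ltac:(rewrite Sz12; exact Hj)).
have LP1 : L_ex (A ++ rep4 B ++ C ++ rep4 D ++ E).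
  rewrite -P1; apply/H; exists (pump w1 i' j'), (pump v1 i' j').
  have Sp : size (pump w1 i' j') = size (pump v1 i' j') by apply: size_pump.
  do 3 (split => //). by rewrite hfold_eq.
have LP2 : L_ex (A' ++ rep4 B' ++ C' ++ rep4 D' ++ E').
  rewrite -P2; apply/H; exists (pump w2 i' j'), (pump v1 i' j').
  have Sp : size (pump w2 i' j') = size (pump v1 i' j') by apply: size_pump.
  do 3 (split => //). by rewrite hfold_eq.
have K1 := fam1_lemma Hn (etrans (esym D1) Hh1) LP1.
have K2 := fam2_lemma Hn2 (etrans (esym D2) Hy2) LP2.
lia.
Qed.

Theorem theorem2 :
  (forall x, grammar_language G_ex x <-> L_ex x) /\
  is_LIN L_ex /\
  ~ in_F_REG_REG L_ex /\
  (fun L : language sym => in_F_REG_REG L) <> (fun L : language sym => is_LIN L).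
Proof.
have HL : is_LIN L_ex by exists G_ex => x; rewrite grammar_ok.
split; first exact: grammar_ok.
split; first exact: HL.
split; first exact: not_F.
move=> E; apply: not_F.
have -> : in_F_REG_REG L_ex = is_LIN L_ex by exact: (f_equal (fun g => g L_ex) E).
exact: HL.
Qed.
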